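(* There is exactly one isomorphism class of two-dimensional evolution algebras $A$ over a field $\mathbb{K}$ such that $\dim(A^2)=1$ and $A^3=0$ (namely the algebra $A_6$ with natural basis $\{e_1,e_2\}$, $e_1^2=0$, $e_2^2=e_1$). Its square is $\mathfrak{D}_6$, and this algebra is associative.
   Context: An evolution algebra over $\mathbb{K}$ is a $\mathbb{K}$-algebra with a basis $\{e_i\}$ (natural basis) such that $e_ie_j=0$ for $i\neq j$. $A^2$ is the span of $\{xy:x,y\in A\}$ and $A^3$ the span of $\{xy:x\in A,y\in A^2\}$. For a natural basis $\{e_1,e_2\}$ with $e_1^2=\omega_{11}e_1+\omega_{21}e_2$, $e_2^2=\omega_{12}e_1+\omega_{22}e_2$, its pseudo-square is the subset of $\{L,T,R,D\}$ where $L,T,R,D$ are present iff $\omega_{11},\omega_{12},\omega_{22},\omega_{21}$ respectively are nonzero; the square of $A$ is the set of pseudo-squares of all natural bases; $\mathfrak{D}_6=\{\{D\},\{T\}\}$. *)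

(* Defs.v *)
From HB Require Import structures.
From mathcomp Require Import all_boot all_order all_algebra.
Set Implicit Arguments. Unset Strict Implicit. Unset Printing Implicit Defensive.
Import GRing.Theory.
Local Open Scope ring_scope.

Inductive letter := L | T | R | D.

Definition letter_to_ord (x : letter) : 'I_4 :=
  match x with L => inord 0 | T => inord 1 | R => inord 2 | D => inord 3 end.
Definition ord_to_letter (i : 'I_4) : letter :=
  match val i with 0 => L | 1 => T | 2 => R | _ => D end.
Lemma letter_to_ordK : cancel letter_to_ord ord_to_letter.
Proof. by case; rewrite /ord_to_letter /= inordK. Qed.
HB.instance Definition _ := Finite.copy letter (can_type letter_to_ordK).

Section EvolutionAlgebras.
Variable K : fieldType.

(* A two-dimensional K-algebra is modelled on K^2 = 'rV[K]_2, its product being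
   determined by the (arbitrary) structure constants c i j = eps_i * eps_j,
   where eps_0, eps_1 is the standard basis. *)
Definition struct2 := 'I_2 -> 'I_2 -> 'rV[K]_2.

Definition amul (c : struct2) (x y : 'rV[K]_2) : 'rV[K]_2 :=
  \sum_(i < 2) \sum_(j < 2) (x 0 i * y 0 j) *: c i j.

Definition basis_mx (b : 'I_2 -> 'rV[K]_2) : 'M[K]_2 := \matrix_(i < 2, j < 2) b i 0 j.

Definition natural_basis (c : struct2) (b : 'I_2 -> 'rV[K]_2) : Prop :=
  basis_mx b \in unitmx /\ (forall i j, i != j -> amul c (b i) (b j) = 0).

Definition is_evolution (c : struct2) : Prop := exists b, natural_basis c b.

(* Structure matrix w.r.t. basis b: b_j^2 = \sum_i omega i j b_i. *)
Definition omega (c : struct2) (b : 'I_2 -> 'rV[K]_2) (i j : 'I_2) : K :=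
  (amul c (b j) (b j) *m invmx (basis_mx b)) 0 i.

Definition pseudo_square (c : struct2) (b : 'I_2 -> 'rV[K]_2) : {set letter} :=
  [set x | match x with
           | L => omega c b 0 0 != 0
           | T => omega c b 0 1 != 0
           | R => omega c b 1 1 != 0
           | D => omega c b 1 0 != 0
           end].

Definition square (c : struct2) : {set letter} -> Prop :=
  fun S => exists b, natural_basis c b /\ pseudo_square c b = S.

Definition frakD6 : {set letter} -> Prop :=
  fun S => S = [set D] \/ S = [set T].

Definition spanned_by (S : 'rV[K]_2 -> Prop) (V : {vspace 'rV[K]_2}) : Prop :=
  (forall v, S v -> v \in V) /\
  (forall W : {vspace 'rV[K]_2}, (forall v, S v -> v \in W) -> (V <= W)%VS).

Definition is_A2 (c : struct2) (V : {vspace 'rV[K]_2}) : Prop :=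
  spanned_by (fun z => exists x y, z = amul c x y) V.

Definition is_A3 (c : struct2) (W : {vspace 'rV[K]_2}) : Prop :=
  exists V, is_A2 c V /\ spanned_by (fun z => exists x y, y \in V /\ z = amul c x y) W.

Definition assoc_alg (c : struct2) : Prop :=
  forall x y z, amul c (amul c x y) z = amul c x (amul c y z).

Definition alg_iso (c c' : struct2) : Prop :=
  exists M : 'M[K]_2, M \in unitmx /\
    forall x y, amul c x y *m M = amul c' (x *m M) (y *m M).

(* A_6: e_1^2 = 0, e_2^2 = e_1 (e_1, e_2 = standard basis). *)
Definition A6 : struct2 :=
  fun i j => if (i == 1) && (j == 1) then delta_mx 0 0 else 0.

End EvolutionAlgebras.

(* Main.v *)
Require Import Defs.
From mathcomp Require Import all_boot all_order all_algebra.
From mathcomp Require Import ring perm.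
Set Implicit Arguments. Unset Strict Implicit. Unset Printing Implicit Defensive.
Import GRing.Theory.
Local Open Scope ring_scope.

Section S.
Variable K : fieldType.
Implicit Types (c : struct2 K) (x y z : 'rV[K]_2).

Lemma l01 : lift ord0 ord0 = 1 :> 'I_2. Proof. exact: val_inj. Qed.
Lemma o0 : ord0 = 0 :> 'I_2. Proof. exact: val_inj. Qed.

Lemma amulE c x y : amul c x y =
  (x 0 0 * y 0 0) *: c 0 0 + (x 0 0 * y 0 1) *: c 0 1 +
  (x 0 1 * y 0 0) *: c 1 0 + (x 0 1 * y 0 1) *: c 1 1.
Proof. by rewrite /amul !big_ord_recl !big_ord0 !addr0 /= l01 o0 addrA. Qed.

Lemma amulDl c x x' y : amul c (x + x') y = amul c x y + amul c x' y.
Proof. apply/rowP => k; rewrite !amulE !mxE; ring. Qed.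
Lemma amulZl c a x y : amul c (a *: x) y = a *: amul c x y.
Proof. apply/rowP => k; rewrite !amulE !mxE; ring. Qed.
Lemma amulDr c x y y' : amul c x (y + y') = amul c x y + amul c x y'.
Proof. apply/rowP => k; rewrite !amulE !mxE; ring. Qed.
Lemma amulZr c a x y : amul c x (a *: y) = a *: amul c x y.
Proof. apply/rowP => k; rewrite !amulE !mxE; ring. Qed.

Lemma A6E x y : amul (A6 K) x y = (x 0 1 * y 0 1) *: delta_mx 0 0.
Proof. by rewrite amulE /A6 /= !scaler0 !add0r. Qed.

Lemma decomp (b : 'I_2 -> 'rV[K]_2) x : basis_mx b \in unitmx ->
  x = (x *m invmx (basis_mx b)) 0 0 *: b 0 + (x *m invmx (basis_mx b)) 0 1 *: b 1.
Proof.
move=> U; rewrite {1}(_ : x = (x *m invmx (basis_mx b)) *m basis_mx b); last by rewrite mulmxKV.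
move: (x *m invmx _) => w.
apply/rowP => k; rewrite !mxE !big_ord_recl big_ord0 !mxE l01 o0; ring.
Qed.

Lemma coord_b (b : 'I_2 -> 'rV[K]_2) k : basis_mx b \in unitmx ->
  b k *m invmx (basis_mx b) = delta_mx 0 k.
Proof.
move=> U; have -> : b k = delta_mx 0 k *m basis_mx b.
  by rewrite -rowE; apply/rowP => j; rewrite !mxE.
by rewrite mulmxK.
Qed.

Lemma ord2 (i : 'I_2) : i = 0 \/ i = 1.
Proof. case: i => [[|[|m]] H]; [left|right|by []]; exact: val_inj. Qed.

Lemma amul_nat c b x y : natural_basis c b ->
  amul c x y = ((x *m invmx (basis_mx b)) 0 0 * (y *m invmx (basis_mx b)) 0 0) *: amul c (b 0) (b 0)
             + ((x *m invmx (basis_mx b)) 0 1 * (y *m invmx (basis_mx b)) 0 1) *: amul c (b 1) (b 1).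
Proof.
move=> [U H]; rewrite {1}(decomp x U) {1}(decomp y U).
rewrite !amulDl !amulDr !amulZl !amulZr (H 0 1) // (H 1 0) // !scaler0 addr0 add0r !scalerA.
done.
Qed.

Lemma dl00 : (delta_mx 0 0 : 'rV[K]_2) 0 0 = 1. Proof. by rewrite mxE. Qed.
Lemma dl01 : (delta_mx 0 0 : 'rV[K]_2) 0 1 = 0. Proof. by rewrite mxE. Qed.
Lemma dl10 : (delta_mx 0 1 : 'rV[K]_2) 0 0 = 0. Proof. by rewrite mxE. Qed.
Lemma dl11 : (delta_mx 0 1 : 'rV[K]_2) 0 1 = 1. Proof. by rewrite mxE. Qed.
Definition dlE := (dl00, dl01, dl10, dl11).

Lemma key c b : natural_basis c b -> amul c (b 1) (b 1) != 0 ->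
  (forall x, amul c x (amul c (b 1) (b 1)) = 0) -> alg_iso c (A6 K).
Proof.
move=> Hn Hs1 Z; have [U H] := Hn.
set M := basis_mx b; set s1 := amul c (b 1) (b 1); set s0 := amul c (b 0) (b 0).
set a := (s1 *m invmx M) 0 0; set be := (s1 *m invmx M) 0 1.
have Hb: be = 0.
  have := Z (b 1); rewrite (amul_nat _ _ Hn) !coord_b // !dlE mul0r scale0r add0r mul1r.
  by move/eqP; rewrite scaler_eq0 (negbTE Hs1) orbF => /eqP.
have Es1 : s1 = a *: b 0 by rewrite {1}(decomp s1 U) -/M -/a -/be Hb scale0r addr0.
have Ha : a != 0 by apply: contra Hs1 => /eqP a0; rewrite -/s1 Es1 a0 scale0r.
have Hs0 : s0 = 0.
  have := Z (b 0); rewrite (amul_nat _ _ Hn) !coord_b // !dlE mul0r scale0r addr0 mul1r.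
  by move/eqP; rewrite scaler_eq0 (negbTE Ha) /= => /eqP.
pose d : 'rV[K]_2 := \row_j (if j == 0 then a^-1 else 1).
exists (invmx M *m diag_mx d); split.
  rewrite unitmx_mul unitmx_inv U /= unitmxE det_diag unitfE big_ord_recl big_ord_recl big_ord0.
  by rewrite !mxE /= !mulr1 invr_eq0.
move=> x y.
rewrite (amul_nat _ _ Hn) -/M -/s0 -/s1 Hs0 scaler0 add0r Es1 A6E !mulmxA scalerA.
rewrite -!scalemxAl coord_b //.
apply/rowP => k; case: (ord2 k) => ->;
  rewrite !mxE !big_ord_recl !big_ord0 !mxE /= ?l01 ?o0 ?big_ord_recl ?big_ord0 /= ?l01 ?o0;
  rewrite ?mulr1n ?mulr0n; field; by [exact: Ha|].
Qed.

Lemma swap_nat c b : natural_basis c b ->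
  natural_basis c (fun k : 'I_2 => b (if k == 0 then 1 else 0)).
Proof.
move=> [U H]; split.
  have -> : basis_mx (fun k : 'I_2 => b (if k == 0 then 1 else 0)) = xrow 0 1 (basis_mx b).
    apply/matrixP => i j; rewrite !mxE; case: (ord2 i) => ->.
      by rewrite tpermL.
    by rewrite tpermR.
  by rewrite xrowE unitmx_mul unitmx_perm.
move=> i j; case: (ord2 i) => ->; case: (ord2 j) => -> //= _; exact: H.
Qed.

Lemma part4 c : is_evolution c -> (exists V, is_A2 c V /\ \dim V = 1%N) -> is_A3 c 0%VS ->
  alg_iso c (A6 K).
Proof.
move=> [b Hn] [V [[HV1 HV2] dV]] [V' [[HV'1 _] [HW _]]].
have Z x y : y \in V' -> amul c x y = 0.
  by move=> Hy; apply/eqP; rewrite -memv0; apply: HW; exists x, y.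
have Z1 x k : amul c x (amul c (b k) (b k)) = 0 by apply: Z; apply: HV'1; exists (b k), (b k).
case: (eqVneq (amul c (b 1) (b 1)) 0) => [s1z | s1nz]; last exact: key Hn s1nz (Z1^~ 1).
case: (eqVneq (amul c (b 0) (b 0)) 0) => [s0z | s0nz].
  have : (V <= 0)%VS.
    apply: HV2 => v [x [y ->]]; by rewrite memv0 (amul_nat _ _ Hn) s0z s1z !scaler0 addr0.
  by rewrite subv0 => /eqP V0; move: dV; rewrite V0 dimv0.
exact: key (swap_nat Hn) s0nz (Z1^~ 0).
Qed.

Definition e (k : 'I_2) : 'rV[K]_2 := delta_mx 0 k.

Lemma e0_neq0 : e 0 != 0.
Proof. by apply/eqP => /rowP/(_ 0); rewrite !mxE /= => /eqP; rewrite oner_eq0. Qed.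

Lemma omega_b c b i j k m : natural_basis c b -> amul c (b j) (b j) = k *: b m ->
  omega c b i j = k * (delta_mx 0 m : 'rV[K]_2) 0 i.
Proof. by move=> [U _] Hj; rewrite /omega Hj -scalemxAl coord_b // mxE. Qed.

Lemma omega_0 c b i j : amul c (b j) (b j) = 0 -> omega c b i j = 0.
Proof. by move=> Hj; rewrite /omega Hj mul0mx mxE. Qed.

Lemma col1 c b : natural_basis c b -> b 0 0 1 = 0 -> b 1 0 1 = 0 -> False.
Proof.
move=> [U _] h0 h1; have := congr1 (fun v : 'rV[K]_2 => v 0 1) (decomp (delta_mx 0 1) U).
by rewrite /= !mxE h0 h1 /= !mulr0 addr0 => /eqP; rewrite oner_eq0.
Qed.

Lemma b_e0 c b p : natural_basis c b -> b p 0 1 = 0 -> b p 0 0 != 0 /\ b p = b p 0 0 *: delta_mx 0 0.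
Proof.
move=> [U _] h; have E : b p = b p 0 0 *: delta_mx 0 0.
  by apply/rowP => k; case: (ord2 k) => ->; rewrite !mxE /= ?h; ring.
split=> //; apply/negP => /eqP h0; move: (coord_b p U); rewrite E h0 scale0r mul0mx.
by move=> /eqP; rewrite eq_sym -/(e p); case: (ord2 p) => ->; apply/negP;
  [exact: e0_neq0 | apply/eqP => /rowP/(_ 1); rewrite !mxE /= => /eqP; rewrite oner_eq0].
Qed.

Lemma A6_nat_sq b : natural_basis (A6 K) b -> pseudo_square (A6 K) b = [set D] \/ pseudo_square (A6 K) b = [set T].
Proof.
move=> Hn; have [U H] := Hn.
have : b 0 0 1 * b 1 0 1 = 0.
  move: (H 0 1 isT); rewrite A6E => /eqP; rewrite scaler_eq0 (negbTE e0_neq0) orbF.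
  by move/eqP.
move/eqP; rewrite mulf_eq0 => /orP [/eqP h0 | /eqP h1].
- right; have [nz E] := b_e0 Hn h0.
  have h1 : b 1 0 1 != 0 by apply/eqP => h1; exact: col1 Hn h0 h1.
  have O0 i : omega (A6 K) b i 0 = 0 by apply: omega_0; rewrite A6E h0 mul0r scale0r.
  have O1 i : omega (A6 K) b i 1 = (b 1 0 1 * b 1 0 1 / b 0 0 0) * (delta_mx 0 0 : 'rV[K]_2) 0 i.
    apply: omega_b => //; rewrite A6E {2}E scalerA mulfVK //.
  have knz : b 1 0 1 * b 1 0 1 / b 0 0 0 != 0 by rewrite !mulf_neq0 // invr_eq0.
  apply/setP => x; rewrite !inE; case: x; rewrite /= ?O0 ?O1 ?dlE ?mulr0 ?mulr1 ?knz ?eqxx //; by apply/esym/negbTE/eqP.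
- left; have [nz E] := b_e0 Hn h1.
  have h0 : b 0 0 1 != 0 by apply/eqP => h0; exact: col1 Hn h0 h1.
  have O1 i : omega (A6 K) b i 1 = 0 by apply: omega_0; rewrite A6E h1 mul0r scale0r.
  have O0 i : omega (A6 K) b i 0 = (b 0 0 1 * b 0 0 1 / b 1 0 0) * (delta_mx 0 1 : 'rV[K]_2) 0 i.
    apply: omega_b => //; rewrite A6E {2}E scalerA mulfVK //.
  have knz : b 0 0 1 * b 0 0 1 / b 1 0 0 != 0 by rewrite !mulf_neq0 // invr_eq0.
  apply/setP => x; rewrite !inE; case: x; rewrite /= ?O0 ?O1 ?dlE ?mulr0 ?mulr1 ?knz ?eqxx //; by apply/esym/negbTE/eqP.
Qed.

Lemma e_nat : natural_basis (A6 K) e.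
Proof.
split.
  have E1 : basis_mx e = 1%:M.
    by apply/matrixP => i j; rewrite !mxE eqxx eq_sym.
  rewrite E1.
  exact: unitmx1.
move=> i j; case: (ord2 i) => ->; case: (ord2 j) => -> //= _; by rewrite A6E !dlE ?mulr0 ?mul0r scale0r.
Qed.

Lemma A2e : is_A2 (A6 K) <[e 0%R]>%VS.
Proof.
split.
  by move=> v [x [y ->]]; rewrite A6E memvZ // memv_line.
move=> W HW; rewrite -memvE; apply: HW; exists (e 1), (e 1).
by rewrite A6E !dlE mulr1 scale1r.
Qed.
End S.

Theorem proposition3p12 (K : fieldType) :
  [/\ is_evolution (A6 K),
      (exists V, is_A2 (A6 K) V /\ \dim V = 1%N),
      is_A3 (A6 K) 0%VS,
      (forall c : struct2 K, is_evolution c ->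
         (exists V, is_A2 c V /\ \dim V = 1%N) -> is_A3 c 0%VS ->
         alg_iso c (A6 K)) &
      (forall S, square (A6 K) S <-> frakD6 S) /\ assoc_alg (A6 K)].
Proof.
split.
- by exists (@e K); exact: e_nat.
- by exists <[e K 0%R]>%VS; split; [exact: A2e | rewrite dim_vline e0_neq0].
- exists <[e K 0%R]>%VS; split; first exact: A2e.
  split; last by move=> W _; exact: sub0v.
  move=> v [x [y [/vlineP [k ->] ->]]].
  by rewrite memv0 A6E mxE dlE mulr0 mulr0 scale0r.
- exact: part4.
split.
  move=> S; split.
    by move=> [b [Hn <-]]; exact: A6_nat_sq.
  case=> ->.
    exists (fun k : 'I_2 => e K (if k == 0 then 1 else 0)); split; first exact: swap_nat (e_nat K).
    have Hn := swap_nat (e_nat K).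
    have O1 i : omega (A6 K) (fun k : 'I_2 => e K (if k == 0 then 1 else 0)) i 1 = 0.
      by apply: omega_0; rewrite /= A6E dlE mulr0 scale0r.
    have O0 i : omega (A6 K) (fun k : 'I_2 => e K (if k == 0 then 1 else 0)) i 0 = 1 * (delta_mx 0 1 : 'rV[K]_2) 0 i.
      by apply: (omega_b _ Hn); rewrite /= A6E !dlE mulr1 !scale1r.
    apply/setP => x; rewrite !inE; case: x; rewrite /= ?O0 ?O1 ?dlE ?mulr0 ?mulr1 ?oner_eq0 ?eqxx //; by apply/esym/negbTE/eqP.
  exists (@e K); split; first exact: e_nat.
  have Hn := e_nat K.
  have O0 i : omega (A6 K) (@e K) i 0 = 0.
    by apply: omega_0; rewrite A6E dlE mulr0 scale0r.
  have O1 i : omega (A6 K) (@e K) i 1 = 1 * (delta_mx 0 0 : 'rV[K]_2) 0 i.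
    by apply: (omega_b _ Hn); rewrite A6E !dlE mulr1 !scale1r.
  apply/setP => x; rewrite !inE; case: x; rewrite /= ?O0 ?O1 ?dlE ?mulr0 ?mulr1 ?oner_eq0 ?eqxx //; by apply/esym/negbTE/eqP.
move=> x y z; rewrite !A6E; apply/rowP => k; rewrite !mxE /=; ring.
Qed.
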